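(* Let $0<\eta<2^{-11}$. Every interval $I\subseteq\mathbb{R}$ of length $7\eta$ contains a sub-interval $J\subseteq I$ of length $\eta$ such that $|\mathrm{Re}(H(x))|\ge \eta^3/2^7$ for every $x\in J$. Moreover, if $I=[a,a+7\eta]$ then one can take $J=[a+j\eta,a+(j+1)\eta]$ for some $j\in\{0,1,\dots,6\}$.
   Context: Rudin–Shapiro polynomials: $P_0(z)=Q_0(z)=1$ and for $s\ge0$, $P_{s+1}(z)=P_s(z)+z^{2^s}Q_s(z)$, $Q_{s+1}(z)=P_s(z)-z^{2^s}Q_s(z)$. Let $t$ be an odd positive integer and $T:=2^{t+10}$. For $x\in\mathbb{R}$ define $\alpha(x):=2^{-(t+1)/2}P_t(e^{ix/T})$, $\beta(x):=2^{-(t+1)/2}Q_t(e^{ix/T})$, and $H(x):=e^{ix}\alpha(x)+e^{2ix}\beta(x)$. *)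

(* Defs.v *)
From Stdlib Require Import Reals.
From Coquelicot Require Import Coquelicot.
Open Scope R_scope.

Definition cexpi (th : R) : Complex.C := (cos th, sin th).

(* Rudin-Shapiro pair (P_s(z), Q_s(z)):
   P_0 = Q_0 = 1, P_{s+1} = P_s + z^{2^s} Q_s, Q_{s+1} = P_s - z^{2^s} Q_s *)
Fixpoint RS (s : nat) (z : Complex.C) : Complex.C * Complex.C :=
  match s with
  | O => (RtoC 1, RtoC 1)
  | S s' =>
      let (p, q) := RS s' z in
      (Cplus p (Cmult (pow_n z (2 ^ s')) q),
       Cminus p (Cmult (pow_n z (2 ^ s')) q))
  end.

Definition RS_P (s : nat) (z : Complex.C) : Complex.C := fst (RS s z).
Definition RS_Q (s : nat) (z : Complex.C) : Complex.C := snd (RS s z).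

Definition Tt (t : nat) : R := 2 ^ (t + 10).

Definition nrm (t : nat) : R := Rpower 2 (- (INR t + 1) / 2).

Definition alpha (t : nat) (x : R) : Complex.C :=
  Cmult (RtoC (nrm t)) (RS_P t (cexpi (x / Tt t))).
Definition beta (t : nat) (x : R) : Complex.C :=
  Cmult (RtoC (nrm t)) (RS_Q t (cexpi (x / Tt t))).

Definition H (t : nat) (x : R) : Complex.C :=
  Cplus (Cmult (cexpi x) (alpha t x)) (Cmult (cexpi (2 * x)) (beta t x)).

(* Main.v *)
Require Import Defs.
From Stdlib Require Import Reals Arith Lra Lia Psatz List Classical.
From Coquelicot Require Import Coquelicot.
Open Scope R_scope.

Open Scope R_scope.


Lemma cexpi_add a b : cexpi (a + b) = Cmult (cexpi a) (cexpi b).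
Proof. unfold cexpi, Cmult; simpl. rewrite cos_plus, sin_plus. f_equal; ring. Qed.

Lemma cexpi_0 : cexpi 0 = RtoC 1.
Proof. unfold cexpi, RtoC. rewrite cos_0, sin_0. reflexivity. Qed.

Lemma Cmod_cexpi th : Cmod (cexpi th) = 1.
Proof. unfold Cmod, cexpi; simpl. rewrite Rmult_1_r, Rmult_1_r.
  rewrite (Rplus_comm _ (sin th * sin th)). 
  replace (sin th * sin th + cos th * cos th) with (Rsqr (sin th) + Rsqr (cos th)) by (unfold Rsqr; ring).
  rewrite sin2_cos2. apply sqrt_1. Qed.

Lemma cexpi_pow th n : pow_n (cexpi th) n = cexpi (INR n * th).
Proof.
  induction n.
  - simpl. rewrite Rmult_0_l, cexpi_0. reflexivity.
  - change (pow_n (cexpi th) (S n)) with (Cmult (cexpi th) (pow_n (cexpi th) n)).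
    rewrite IHn, S_INR, <- cexpi_add. f_equal; ring.
Qed.

Fixpoint pq (s : nat) : list R * list R :=
  match s with
  | O => (1 :: nil, 1 :: nil)
  | S s' => let (p, q) := pq s' in (p ++ q, p ++ map Ropp q)
  end.

Lemma pq_len s : length (fst (pq s)) = (2 ^ s)%nat /\ length (snd (pq s)) = (2 ^ s)%nat.
Proof.
  induction s; simpl; auto.
  destruct (pq s) as [p q]; simpl in *. destruct IHs as [H1 H2].
  rewrite !length_app, length_map. lia.
Qed.

Open Scope C_scope.

Fixpoint Wc (l : list R) (n0 : nat) (g : nat -> C) : C :=
  match l with
  | nil => RtoC 0
  | c :: l' => RtoC c * g n0 + Wc l' (S n0) g
  end.

Lemma Wc_app l1 l2 n0 g : Wc (l1 ++ l2) n0 g = Wc l1 n0 g + Wc l2 (n0 + length l1) g.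
Proof.
  revert n0; induction l1; intros n0; simpl.
  - rewrite Nat.add_0_r. ring.
  - rewrite IHl1. replace (S n0 + length l1)%nat with (n0 + S (length l1))%nat by lia. ring.
Qed.

Lemma Wc_ext l n0 g h : (forall n, g n = h n) -> Wc l n0 g = Wc l n0 h.
Proof. intros E; revert n0; induction l; intros n0; simpl; auto. rewrite E, IHl; auto. Qed.

Lemma Wc_shift l n0 m g : Wc l (n0 + m) g = Wc l n0 (fun n => g (n + m)%nat).
Proof. revert n0; induction l; intros n0; simpl; auto. rewrite <- IHl. reflexivity. Qed.

Lemma Wc_scal l n0 g u : u * Wc l n0 g = Wc l n0 (fun n => u * g n).
Proof. revert n0; induction l; intros n0; simpl. ring. rewrite <- IHl. ring. Qed.

Lemma Wc_plus l n0 g h : Wc l n0 (fun n => g n + h n) = Wc l n0 g + Wc l n0 h.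
Proof. revert n0; induction l; intros n0; simpl. ring. rewrite IHl. ring. Qed.

Lemma Wc_opp l n0 g : Wc (map Ropp l) n0 g = - Wc l n0 g.
Proof. revert n0; induction l; intros n0; simpl. ring. rewrite IHl, RtoC_opp. ring. Qed.

Lemma RS_repr s th :
  RS s (cexpi th) = (Wc (fst (pq s)) 0 (fun n => cexpi (INR n * th)),
                     Wc (snd (pq s)) 0 (fun n => cexpi (INR n * th))).
Proof.
  induction s.
  - simpl. rewrite Rmult_0_l, cexpi_0. f_equal; ring.
  - simpl. rewrite IHs. destruct (pq s) as [p q] eqn:Epq. simpl.
    destruct (pq_len s) as [L1 L2]. rewrite Epq in L1, L2; simpl in L1, L2.
    rewrite !Wc_app, Wc_opp, L1, cexpi_pow, !Wc_shift, Wc_scal.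
    rewrite (Wc_ext q 0 (fun n => cexpi (INR (n + 2 ^ s) * th))
                         (fun n => cexpi (INR (2 ^ s) * th) * cexpi (INR n * th))).
    + f_equal; ring.
    + intros n. rewrite <- cexpi_add, plus_INR. f_equal. ring.
Qed.

Open Scope C_scope.

Fixpoint csum (g : nat -> C) (K : nat) : C :=
  match K with O => g O | S K' => csum g K' + g K end.

Lemma Wc_csum l n0 g K :
  Wc l n0 (fun n => csum (fun j => g n j) K) = csum (fun j => Wc l n0 (fun n => g n j)) K.
Proof.
  induction K; simpl; auto.
  rewrite Wc_plus, IHK. reflexivity.
Qed.

Lemma csum_scal g K u : u * csum g K = csum (fun j => u * g j) K.
Proof. induction K; simpl; auto. rewrite <- IHK. ring. Qed.

Lemma csum_ext g h K : (forall j, g j = h j) -> csum g K = csum h K.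
Proof. intros E; induction K; simpl; rewrite ?IHK, ?E; auto. Qed.

Lemma RtoC_sum (a : nat -> R) K z :
  RtoC (sum_f_R0 a K) * z = csum (fun j => RtoC (a j) * z) K.
Proof. induction K; simpl; auto. rewrite <- IHK, RtoC_plus. ring. Qed.

Lemma Cmod_csum g K : (Cmod (csum g K) <= sum_f_R0 (fun j => Cmod (g j)) K)%R.
Proof.
  induction K; simpl. lra.
  eapply Rle_trans. apply Cmod_triangle. lra.
Qed.

Lemma Cmod_csum0 g K :
  (Cmod (csum g K - g O) <= sum_f_R0 (fun j => Cmod (g j)) K - Cmod (g O))%R.
Proof.
  induction K; simpl.
  - replace (g O - g O) with (RtoC 0) by ring. rewrite Cmod_0. lra.
  - replace (csum g K + g (S K) - g O) with ((csum g K - g O) + g (S K)) by ring.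
    eapply Rle_trans. apply Cmod_triangle. lra.
Qed.

Definition Zk (l : list R) (k : nat) (th : R) : C :=
  Wc l 0 (fun n => RtoC (INR n ^ k) * cexpi (INR n * th)).

Lemma Zk_shift l k m th :
  Wc l m (fun n => RtoC (INR n ^ k) * cexpi (INR n * th)) =
  cexpi (INR m * th) *
  csum (fun j => RtoC (Binomial.C k j * INR m ^ (k - j)) * Zk l j th) k.
Proof.
  replace m with (0 + m)%nat at 1 by lia.
  rewrite Wc_shift.
  rewrite (Wc_ext l 0 _ (fun n => csum (fun j =>
     RtoC (Binomial.C k j * INR m ^ (k - j)) *
        (RtoC (INR n ^ j) * cexpi (INR n * th)) * cexpi (INR m * th)) k)).
  - rewrite Wc_csum, csum_scal. apply csum_ext. intros j.
    unfold Zk. rewrite Wc_scal, Wc_scal. apply Wc_ext. intros n. ring.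
  - intros n. rewrite plus_INR, binomial.
    replace ((INR n + INR m) * th)%R with (INR m * th + INR n * th)%R by ring.
    rewrite cexpi_add.
    transitivity (RtoC (sum_f_R0 (fun i => Binomial.C k i * INR n ^ i * INR m ^ (k - i))%R k)
                  * (cexpi (INR n * th) * cexpi (INR m * th))).
    + ring.
    + rewrite RtoC_sum. apply csum_ext. intros j. rewrite !RtoC_mult. ring.
Qed.

Definition PP s k th := Zk (fst (pq s)) k th.
Definition QQ s k th := Zk (snd (pq s)) k th.

Lemma PQ_step s k th :
  PP (S s) k th = PP s k th + cexpi (INR (2^s) * th) *
     csum (fun j => RtoC (Binomial.C k j * INR (2^s) ^ (k - j)) * QQ s j th) k /\
  QQ (S s) k th = PP s k th - cexpi (INR (2^s) * th) *
     csum (fun j => RtoC (Binomial.C k j * INR (2^s) ^ (k - j)) * QQ s j th) k.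
Proof.
  unfold PP, QQ, Zk. simpl. destruct (pq_len s) as [L1 L2].
  destruct (pq s) as [p q]; simpl in *.
  rewrite !Wc_app, Wc_opp, L1. simpl. rewrite (Zk_shift q). unfold Zk. split; ring.
Qed.

Lemma Cmod2_par a b : (Cmod (a + b) ^ 2 + Cmod (a - b) ^ 2 = 2 * (Cmod a ^ 2 + Cmod b ^ 2))%R.
Proof. rewrite !Cmod2_alt. destruct a, b. simpl. ring. Qed.

Lemma PQ_norm0 s th : (Cmod (PP s 0 th) ^ 2 + Cmod (QQ s 0 th) ^ 2 = 2 ^ (S s))%R.
Proof.
  induction s.
  - unfold PP, QQ, Zk. simpl. rewrite Rmult_0_l, cexpi_0.
    replace (RtoC 1 * (RtoC 1 * RtoC 1) + RtoC 0) with (RtoC 1) by ring.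
    rewrite Cmod_1. ring.
  - destruct (PQ_step s 0 th) as [E1 E2]. rewrite E1, E2. simpl csum.
    rewrite Cmod2_par, Cmod_mult, Cmod_cexpi.
    rewrite Cmod_mult, Cmod_R, C_n_n, !Rmult_1_l, Rabs_R1, Rmult_1_l.
    replace (2 ^ S (S s))%R with (2 * 2 ^ S s)%R by (simpl; ring).
    rewrite <- IHs. ring.
Qed.

Lemma Cpos k j : (0 <= Binomial.C k j)%R.
Proof.
  unfold Binomial.C. apply Rle_mult_inv_pos. apply pos_INR.
  apply Rmult_lt_0_compat; apply INR_fact_lt_0.
Qed.

Lemma sumC k : sum_f_R0 (fun j => Binomial.C (S k) j) k = (2 ^ S k - 1)%R.
Proof.
  pose proof (binomial 1 1 (S k)) as B.
  rewrite tech5 in B. rewrite C_n_n, pow1 in B.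
  replace (1+1)%R with 2%R in B by ring.
  rewrite B, pow1.
  replace (sum_f_R0 (fun i : nat => Binomial.C (S k) i * 1 ^ i * 1 ^ (S k - i)) k)%R
   with (sum_f_R0 (fun j => Binomial.C (S k) j) k). ring.
  apply sum_eq. intros i _. rewrite !pow1. ring.
Qed.

Lemma ineq_step a b v N R0 :
  (0 <= a)%R -> (0 <= b)%R -> (0 <= v)%R -> (0 <= N)%R -> (0 <= R0)%R ->
  (a ^ 2 + b ^ 2 <= N ^ 2)%R -> (v <= b + R0)%R ->
  (a ^ 2 + v ^ 2 <= (N + R0) ^ 2)%R.
Proof.
  intros. assert (b <= N)%R by nra. nra.
Qed.

Lemma bernstein s k th :
  (Cmod (PP s k th) ^ 2 + Cmod (QQ s k th) ^ 2 <= ((2 ^ s) ^ k) ^ 2 * 2 ^ (S s))%R.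
Proof.
  revert k. induction s; intros k.
  - destruct k.
    + rewrite PQ_norm0. simpl. lra.
    + assert (E: Zk (1::nil) (S k) th = RtoC 0).
      { unfold Zk. simpl Wc. change (INR 0) with 0%R. rewrite Rmult_0_l. ring. }
      unfold PP, QQ. simpl pq. simpl fst; simpl snd. rewrite E, Cmod_0.
      assert (0 <= ((2 ^ 0) ^ S k) ^ 2 * 2 ^ 1)%R by (apply Rmult_le_pos; apply pow_le; try apply pow_le; try apply pow_le; lra).
      simpl pow at 1 2. lra.
  - set (rho := sqrt (2 ^ S s)).
    assert (Hrho : (rho ^ 2 = 2 ^ S s)%R).
    { unfold rho. rewrite <- Rsqr_pow2, Rsqr_sqrt; auto. apply pow_le; lra. }
    assert (Hrho0 : (0 <= rho)%R) by apply sqrt_pos.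
    assert (HQ : forall j, (Cmod (QQ s j th) <= (2 ^ s) ^ j * rho)%R).
    { intros j. specialize (IHs j). pose proof (Cmod_ge_0 (PP s j th)).
      pose proof (Cmod_ge_0 (QQ s j th)).
      assert (0 <= (2 ^ s) ^ j)%R by (apply pow_le; apply pow_le; lra).
      assert (Cmod (QQ s j th) ^ 2 <= ((2 ^ s) ^ j * rho) ^ 2)%R.
      { rewrite Rpow_mult_distr, Hrho. nra. }
      assert (0 <= (2 ^ s) ^ j * rho)%R by (apply Rmult_le_pos; auto). nra. }
    destruct (PQ_step s k th) as [E1 E2]. rewrite E1, E2.
    set (V := cexpi (INR (2 ^ s) * th) * csum _ k).
    rewrite Cmod2_par.
    set (m := INR (2 ^ s)).
    assert (Hm : m = (2 ^ s)%R) by (unfold m; rewrite pow_INR; simpl; f_equal; ring).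
    assert (Hm0 : (0 <= m)%R) by (rewrite Hm; apply pow_le; lra).
    assert (HV : (Cmod V <= Cmod (QQ s k th) + rho * (2 ^ s) ^ k * (2 ^ k - 1))%R).
    { unfold V. rewrite Cmod_mult, Cmod_cexpi, Rmult_1_l.
      eapply Rle_trans. apply Cmod_csum.
      destruct k.
      - simpl. rewrite Cmod_mult, Cmod_R, C_n_n. rewrite Rmult_1_l, Rabs_R1. lra.
      - rewrite tech5. rewrite Cmod_mult, Cmod_R, C_n_n, Nat.sub_diag. fold m.
        rewrite pow_O, Rmult_1_l, Rabs_R1, Rmult_1_l.
        cut (sum_f_R0 (fun j => Cmod (RtoC (Binomial.C (S k) j * m ^ (S k - j)) * QQ s j th)) k
             <= rho * (2 ^ s) ^ S k * (2 ^ S k - 1))%R. { intros; lra. }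
        rewrite <- sumC, scal_sum.
        apply sum_Rle. intros j Hj.
        rewrite Cmod_mult, Cmod_R, Rabs_pos_eq.
        2:{ apply Rmult_le_pos. apply Cpos. apply pow_le; auto. }
        eapply Rle_trans. apply Rmult_le_compat_l. apply Rmult_le_pos. apply Cpos. apply pow_le; auto.
        apply HQ.
        rewrite Hm.
        replace ((2 ^ s) ^ S k)%R with ((2 ^ s) ^ (S k - j) * (2 ^ s) ^ j)%R.
        + apply Req_le. ring.
        + rewrite <- pow_add. f_equal. lia. }
    pose proof (Cmod_ge_0 V). pose proof (Cmod_ge_0 (PP s k th)). pose proof (Cmod_ge_0 (QQ s k th)).
    assert (Hpk : (0 <= (2 ^ s) ^ k)%R) by (apply pow_le; apply pow_le; lra).
    assert (H2k : (1 <= 2 ^ k)%R) by (apply pow_R1_Rle; lra).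
    pose proof (ineq_step (Cmod (PP s k th)) (Cmod (QQ s k th)) (Cmod V) ((2 ^ s) ^ k * rho)
                  (rho * (2 ^ s) ^ k * (2 ^ k - 1))) as I.
    assert (Cmod (PP s k th) ^ 2 + Cmod V ^ 2 <= ((2 ^ s) ^ k * rho + rho * (2 ^ s) ^ k * (2 ^ k - 1)) ^ 2)%R.
    { apply I; auto. apply Rmult_le_pos; auto. apply Rmult_le_pos. apply Rmult_le_pos; auto. lra.
      rewrite Rpow_mult_distr, Hrho. apply IHs. }
    replace (((2 ^ S s) ^ k) ^ 2 * 2 ^ S (S s))%R with
      (2 * (((2 ^ s) ^ k * rho + rho * (2 ^ s) ^ k * (2 ^ k - 1)) ^ 2))%R.
    + lra.
    + replace ((2 ^ s) ^ k * rho + rho * (2 ^ s) ^ k * (2 ^ k - 1))%R with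
        ((2 ^ s) ^ k * 2 ^ k * rho)%R by ring.
      rewrite Rpow_mult_distr, Hrho. assert (E: ((2 ^ S s)^k = (2^s)^k * 2^k)%R) by (rewrite <- Rpow_mult_distr; f_equal; simpl; ring). rewrite E.
      change (2 ^ S (S s))%R with (2 * 2 ^ S s)%R. ring.
Qed.

Open Scope R_scope.

Lemma Wc_deriv l n0 (u : nat -> C) (w : nat -> R) x :
  is_derive (fun y => Re (Wc l n0 (fun n => Cmult (u n) (cexpi (w n * y))))) x
    (Re (Wc l n0 (fun n => Cmult (Cmult (Cmult (u n) Ci) (RtoC (w n))) (cexpi (w n * x))))).
Proof.
  revert n0; induction l as [|c l IH]; intros n0.
  - simpl. apply (is_derive_const 0).
  - simpl Wc.
    apply is_derive_ext with (f := fun y => (c * (Re (u n0) * cos (w n0 * y) - Im (u n0) * sin (w n0 * y))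
        + Re (Wc l (S n0) (fun n => Cmult (u n) (cexpi (w n * y)))))%R).
    { intros y. rewrite re_plus. f_equal. destruct (u n0); unfold cexpi, Cmult, RtoC, Re, Im; simpl; ring. }
    rewrite re_plus.
    replace (Re (Cmult (RtoC c) (Cmult (Cmult (Cmult (u n0) Ci) (RtoC (w n0))) (cexpi (w n0 * x)))))
      with (c * (Re (u n0) * (- (w n0) * sin (w n0 * x)) - Im (u n0) * (w n0 * cos (w n0 * x))))%R.
    + apply (is_derive_plus (fun y => c * (Re (u n0) * cos (w n0 * y) - Im (u n0) * sin (w n0 * y)))%R).
      * auto_derive; auto. ring.
      * apply IH.
    + destruct (u n0); unfold cexpi, Cmult, RtoC, Re, Im, Ci; simpl; ring.
Qed.

Section F.
Variable t : nat.
Let T := Tt t.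

Definition G (l : list R) (k : nat) (w0 : R) (x : R) : C :=
  Wc l 0 (fun n => Cmult (Cmult (Cpow Ci k) (RtoC ((w0 + INR n / T) ^ k))) (cexpi ((w0 + INR n / T) * x))).

Definition fk (k : nat) (x : R) : R :=
  nrm t * (Re (G (fst (pq t)) k 1 x) + Re (G (snd (pq t)) k 2 x)).

Lemma G_deriv l k w0 x : is_derive (fun y => Re (G l k w0 y)) x (Re (G l (S k) w0 x)).
Proof.
  unfold G.
  eapply is_derive_ext; [| eapply is_derive_ext_loc]. 2: { apply filter_forall. intros; reflexivity. }
  { intros; reflexivity. }
  replace (Re (Wc l 0 _)) with
   (Re (Wc l 0 (fun n => Cmult (Cmult (Cmult (Cmult (Cpow Ci k) (RtoC ((w0 + INR n / T) ^ k))) Ci) (RtoC (w0 + INR n / T))) (cexpi ((w0 + INR n / T) * x))))).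
  - apply (Wc_deriv l 0 (fun n => Cmult (Cpow Ci k) (RtoC ((w0 + INR n / T) ^ k))) (fun n => w0 + INR n / T) x).
  - f_equal. apply Wc_ext. intros n. simpl Cpow. simpl pow. rewrite RtoC_mult. ring.
Qed.

Lemma fk_deriv k x : is_derive (fk k) x (fk (S k) x).
Proof.
  unfold fk.
  apply is_derive_scal.
  apply (is_derive_plus (fun y => Re (G (fst (pq t)) k 1 y)) (fun y => Re (G (snd (pq t)) k 2 y))).
  apply G_deriv. apply G_deriv.
Qed.

Lemma Derive_n_fk n x : Derive_n (fk 0) n x = fk n x.
Proof.
  revert x; induction n; intros x; simpl; auto.
  rewrite (Derive_ext _ (fk n)); auto.
  apply is_derive_unique, fk_deriv.
Qed.

Lemma ex_derive_n_fk n x : ex_derive_n (fk 0) n x.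
Proof.
  destruct n; simpl; auto.
  apply ex_derive_ext with (f := fk n). { intros; symmetry; apply Derive_n_fk. }
  eexists. apply fk_deriv.
Qed.

Lemma f0_eq x : Re (H t x) = fk 0 x.
Proof.
  unfold H, fk, alpha, beta, RS_P, RS_Q. rewrite RS_repr. simpl fst; simpl snd.
  rewrite re_plus.
  assert (E : forall l w0, Cmult (cexpi (w0 * x)) (Cmult (RtoC (nrm t)) (Wc l 0 (fun n => cexpi (INR n * (x / Tt t)))))
     = Cmult (RtoC (nrm t)) (G l 0 w0 x)).
  { intros l w0. unfold G. rewrite !Wc_scal. apply Wc_ext. intros n.
    simpl Cpow; simpl pow.
    replace ((w0 + INR n / T) * x) with (w0 * x + INR n * (x / Tt t)) by (unfold T; field; apply pow_nonzero; lra).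
    rewrite cexpi_add. ring. }
  replace (cexpi x) with (cexpi (1 * x)) by (f_equal; ring).
  rewrite E, E, !re_scal_l. ring.
Qed.

End F.

Open Scope R_scope.

Lemma nrm_pos t : 0 < nrm t.
Proof. unfold nrm, Rpower. apply exp_pos. Qed.

Lemma nrm_sq t : nrm t ^ 2 * 2 ^ (S t) = 1.
Proof.
  unfold nrm. simpl pow. rewrite Rmult_1_r, <- Rpower_plus.
  replace (- (INR t + 1) / 2 + - (INR t + 1) / 2) with (- INR (S t)) by (rewrite S_INR; field).
  rewrite Rpower_Ropp, Rpower_pow by lra. simpl pow. field. apply pow_nonzero. lra.
Qed.

Lemma nrm_Z t j : nrm t * Cmod (PP t j (0)) <= (2 ^ t) ^ j.
Abort.

Lemma nrmZ_bound t j th :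
  nrm t * Cmod (PP t j th) <= (2 ^ t) ^ j /\ nrm t * Cmod (QQ t j th) <= (2 ^ t) ^ j.
Proof.
  pose proof (bernstein t j th) as B. pose proof (nrm_sq t) as N. pose proof (nrm_pos t).
  pose proof (Cmod_ge_0 (PP t j th)). pose proof (Cmod_ge_0 (QQ t j th)).
  assert (0 <= (2 ^ t) ^ j) by (apply pow_le; apply pow_le; lra).
  assert (0 < 2 ^ S t) by (apply pow_lt; lra).
  assert (E : (nrm t * Cmod (PP t j th)) ^ 2 + (nrm t * Cmod (QQ t j th)) ^ 2 <= ((2 ^ t) ^ j) ^ 2).
  { replace (((2 ^ t) ^ j) ^ 2) with (((2 ^ t) ^ j) ^ 2 * 2 ^ S t * nrm t ^ 2) by (rewrite Rmult_assoc, (Rmult_comm (2 ^ S t)), N; ring).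
    replace ((nrm t * Cmod (PP t j th)) ^ 2 + (nrm t * Cmod (QQ t j th)) ^ 2)
      with ((Cmod (PP t j th) ^ 2 + Cmod (QQ t j th) ^ 2) * nrm t ^ 2) by ring.
    apply Rmult_le_compat_r. nra. exact B. }
  assert (0 <= nrm t * Cmod (PP t j th)) by nra.
  assert (0 <= nrm t * Cmod (QQ t j th)) by nra.
  split; nra.
Qed.

Lemma sum_minus0 (X Y : nat -> R) k :
  (forall j, (0 < j)%nat -> X j <= Y j) ->
  sum_f_R0 X k - X O <= sum_f_R0 Y k - Y O.
Proof.
  intros HXY. induction k; simpl. lra.
  specialize (HXY (S k) ltac:(lia)). lra.
Qed.

Section A.
Variable t : nat.
Let T := Tt t.

Lemma T_pos : 0 < T.
Proof. unfold T, Tt. apply pow_lt. lra. Qed.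

Lemma G_expand l k w0 x :
  G t l k w0 x = Cmult (Cmult (Cpow Ci k) (cexpi (w0 * x)))
     (csum (fun j => Cmult (RtoC (Binomial.C k j * (/ T) ^ j * w0 ^ (k - j))) (Zk l j (x / T))) k).
Proof.
  pose proof T_pos.
  unfold G. fold T.
  rewrite (Wc_ext l 0 _ (fun n => csum (fun j =>
    Cmult (Cmult (Cmult (Cpow Ci k) (cexpi (w0 * x))) (RtoC (Binomial.C k j * (/ T) ^ j * w0 ^ (k - j))))
        (Cmult (RtoC (INR n ^ j)) (cexpi (INR n * (x / T))))) k)).
  - rewrite Wc_csum, csum_scal. apply csum_ext. intros j. unfold Zk.
    rewrite !Wc_scal. apply Wc_ext. intros n. ring.
  - intros n.
    replace ((w0 + INR n / T) * x) with (w0 * x + INR n * (x / T)) by (field; lra).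
    rewrite cexpi_add.
    replace (w0 + INR n / T) with (INR n / T + w0) by ring.
    rewrite binomial.
    transitivity (Cmult (Cmult (Cpow Ci k) (cexpi (w0 * x)))
      (Cmult (RtoC (sum_f_R0 (fun i => Binomial.C k i * (INR n / T) ^ i * w0 ^ (k - i)) k))
             (cexpi (INR n * (x / T))))). { ring. }
    rewrite RtoC_sum, csum_scal. apply csum_ext. intros j.
    replace (Binomial.C k j * (INR n / T) ^ j * w0 ^ (k - j))
      with ((Binomial.C k j * (/ T) ^ j * w0 ^ (k - j)) * INR n ^ j).
    + rewrite RtoC_mult. ring.
    + unfold Rdiv. rewrite Rpow_mult_distr. ring.
Qed.

Definition eps := / 2 ^ 10.

Lemma Tinv_pow j : (/ T) ^ j * (2 ^ t) ^ j = eps ^ j.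
Proof.
  rewrite <- Rpow_mult_distr. f_equal. unfold T, Tt, eps. rewrite pow_add.
  field; try split; apply pow_nonzero; lra.
Qed.

Lemma G_approx l k w0 x (Hw : 0 <= w0)
  (HZ : forall j th, nrm t * Cmod (Zk l j th) <= (2 ^ t) ^ j) :
  Rabs (nrm t * Re (G t l k w0 x) - Re (Cmult (Cpow Ci k) (Cmult (RtoC (w0 ^ k))
           (Cmult (RtoC (nrm t)) (Cmult (cexpi (w0 * x)) (Zk l 0 (x / T)))))))
  <= (eps + w0) ^ k - w0 ^ k.
Proof.
  pose proof T_pos. pose proof (nrm_pos t).
  rewrite G_expand.
  set (g := fun j => Cmult (RtoC (Binomial.C k j * (/ T) ^ j * w0 ^ (k - j))) (Zk l j (x / T))).
  assert (Eg0 : g O = Cmult (RtoC (w0 ^ k)) (Zk l 0 (x / T))).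
  { unfold g. rewrite C_n_0, Nat.sub_0_r, pow_O, !Rmult_1_l. reflexivity. }
  replace (nrm t * Re (Cmult (Cmult (Cpow Ci k) (cexpi (w0 * x))) (csum g k)) -
     Re (Cmult (Cpow Ci k) (Cmult (RtoC (w0 ^ k)) (Cmult (RtoC (nrm t)) (Cmult (cexpi (w0 * x)) (Zk l 0 (x / T)))))))
    with (Re (Cmult (RtoC (nrm t)) (Cmult (Cmult (Cpow Ci k) (cexpi (w0 * x))) (Cminus (csum g k) (g O))))).
  2: { rewrite Eg0.
      transitivity (Re (Cminus (Cmult (RtoC (nrm t)) (Cmult (Cmult (Cpow Ci k) (cexpi (w0 * x))) (csum g k))) (Cmult (Cpow Ci k) (Cmult (RtoC (w0 ^ k)) (Cmult (RtoC (nrm t)) (Cmult (cexpi (w0 * x)) (Zk l 0 (x / T)))))))).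
      { f_equal. ring. }
      generalize (Cmult (Cmult (Cpow Ci k) (cexpi (w0 * x))) (csum g k)).
      generalize (Cmult (Cpow Ci k) (Cmult (RtoC (w0 ^ k)) (Cmult (RtoC (nrm t)) (Cmult (cexpi (w0 * x)) (Zk l 0 (x / T)))))).
      intros [a b] [c d]. unfold Cminus, Cmult, Cplus, Copp, RtoC, Re; simpl; ring. }
  eapply Rle_trans. apply re_le_Cmod.
  rewrite !Cmod_mult, Cmod_R, Cmod_pow, Cmod_Ci, Cmod_cexpi, pow1, Rabs_pos_eq by lra.
  rewrite !Rmult_1_l.
  eapply Rle_trans. apply Rmult_le_compat_l. lra. apply Cmod_csum0.
  rewrite Rmult_minus_distr_l, scal_sum.
  replace ((eps + w0) ^ k - w0 ^ k) with
    (sum_f_R0 (fun j => Binomial.C k j * eps ^ j * w0 ^ (k - j)) k - Binomial.C k 0 * eps ^ 0 * w0 ^ (k - 0)).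
  2: { rewrite binomial, C_n_0, Nat.sub_0_r. simpl pow at 2. ring. }
  replace (nrm t * Cmod (g O)) with ((fun j => Cmod (g j) * nrm t) O) by (simpl; ring).
  apply (sum_minus0 (fun j => Cmod (g j) * nrm t) (fun j => Binomial.C k j * eps ^ j * w0 ^ (k - j))).
  intros j _. unfold g. rewrite Cmod_mult, Cmod_R, Rabs_pos_eq.
  2: { apply Rmult_le_pos. apply Rmult_le_pos. apply Cpos. apply pow_le. left; apply Rinv_0_lt_compat; auto.
       apply pow_le; auto. }
  rewrite <- Tinv_pow.
  specialize (HZ j (x / T)).
  assert (0 <= Binomial.C k j * (/ T) ^ j * w0 ^ (k - j)).
  { apply Rmult_le_pos. apply Rmult_le_pos. apply Cpos. apply pow_le. left; apply Rinv_0_lt_compat; auto.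
    apply pow_le; auto. }
  replace (Binomial.C k j * (/ T) ^ j * w0 ^ (k - j) * Cmod (Zk l j (x / T)) * nrm t)
    with ((Binomial.C k j * (/ T) ^ j * w0 ^ (k - j)) * (nrm t * Cmod (Zk l j (x / T)))) by ring.
  replace (Binomial.C k j * ((/ T) ^ j * (2 ^ t) ^ j) * w0 ^ (k - j))
    with ((Binomial.C k j * (/ T) ^ j * w0 ^ (k - j)) * (2 ^ t) ^ j) by ring.
  apply Rmult_le_compat_l; auto.
Qed.

End A.

Open Scope R_scope.

Definition AA t x : C := Cmult (RtoC (nrm t)) (Cmult (cexpi (1 * x)) (PP t 0 (x / Tt t))).
Definition BB t x : C := Cmult (RtoC (nrm t)) (Cmult (cexpi (2 * x)) (QQ t 0 (x / Tt t))).

Lemma AB_norm t x : Cmod (AA t x) ^ 2 + Cmod (BB t x) ^ 2 = 1.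
Proof.
  unfold AA, BB. rewrite !Cmod_mult, !Cmod_cexpi, !Cmod_R, Rabs_pos_eq by (left; apply nrm_pos).
  rewrite !Rmult_1_l. transitivity (nrm t ^ 2 * 2 ^ S t). rewrite <- (PQ_norm0 t (x / Tt t)). unfold PP, QQ. ring. apply nrm_sq.
Qed.

Lemma fk_approx t k x :
  Rabs (fk t k x - Re (Cmult (Cpow Ci k) (Cplus (AA t x) (Cmult (RtoC (2 ^ k)) (BB t x)))))
  <= ((eps + 1) ^ k - 1 ^ k) + ((eps + 2) ^ k - 2 ^ k).
Proof.
  pose proof (G_approx t (fst (pq t)) k 1 x ltac:(lra) (fun j th => proj1 (nrmZ_bound t j th))) as H1.
  pose proof (G_approx t (snd (pq t)) k 2 x ltac:(lra) (fun j th => proj2 (nrmZ_bound t j th))) as H2.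
  unfold fk.
  replace (Re (Cmult (Cpow Ci k) (Cplus (AA t x) (Cmult (RtoC (2 ^ k)) (BB t x)))))
    with (Re (Cmult (Cpow Ci k) (Cmult (RtoC (1 ^ k)) (Cmult (RtoC (nrm t)) (Cmult (cexpi (1 * x)) (Zk (fst (pq t)) 0 (x / Tt t)))))) +
          Re (Cmult (Cpow Ci k) (Cmult (RtoC (2 ^ k)) (Cmult (RtoC (nrm t)) (Cmult (cexpi (2 * x)) (Zk (snd (pq t)) 0 (x / Tt t))))))).
  2: { rewrite <- re_plus. f_equal. unfold AA, BB, PP, QQ. rewrite pow1. ring. }
  eapply Rle_trans; [| apply Rplus_le_compat; [apply H1 | apply H2]].
  eapply Rle_trans; [| apply Rabs_triang]. apply Req_le. f_equal. ring.
Qed.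

Lemma main_terms t x : exists a b p q : R,
  a ^ 2 + b ^ 2 + p ^ 2 + q ^ 2 = 1 /\
  Rabs (fk t 0 x - (a + p)) <= / 50 /\
  Rabs (fk t 1 x - (- b - 2 * q)) <= / 50 /\
  Rabs (fk t 2 x - (- a - 4 * p)) <= / 50 /\
  Rabs (fk t 3 x - (b + 8 * q)) <= / 50 /\
  Rabs (fk t 4 x) <= 18.
Proof.
  pose proof (AB_norm t x) as N.
  destruct (AA t x) as [a b] eqn:EA. destruct (BB t x) as [p q] eqn:EB.
  exists a, b, p, q.
  rewrite !Cmod2_alt in N. simpl in N.
  assert (Hk : forall k, Rabs (fk t k x - Re (Cmult (Cpow Ci k) (Cplus (a, b) (Cmult (RtoC (2 ^ k)) (p, q)))))
     <= ((eps + 1) ^ k - 1 ^ k) + ((eps + 2) ^ k - 2 ^ k)).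
  { intros k. rewrite <- EA, <- EB. apply fk_approx. }
  assert (Ee : eps = / 1024) by (unfold eps; simpl; lra).
  rewrite Ee in Hk.
  assert (R0 : Re (Cmult (Cpow Ci 0) (Cplus (a, b) (Cmult (RtoC (2 ^ 0)) (p, q)))) = a + p)
    by (unfold Cmult, Cplus, RtoC, Ci; simpl; ring).
  assert (R1 : Re (Cmult (Cpow Ci 1) (Cplus (a, b) (Cmult (RtoC (2 ^ 1)) (p, q)))) = - b - 2 * q)
    by (unfold Cmult, Cplus, RtoC, Ci; simpl; ring).
  assert (R2 : Re (Cmult (Cpow Ci 2) (Cplus (a, b) (Cmult (RtoC (2 ^ 2)) (p, q)))) = - a - 4 * p)
    by (unfold Cmult, Cplus, RtoC, Ci; simpl; ring).
  assert (R3 : Re (Cmult (Cpow Ci 3) (Cplus (a, b) (Cmult (RtoC (2 ^ 3)) (p, q)))) = b + 8 * q)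
    by (unfold Cmult, Cplus, RtoC, Ci; simpl; ring).
  assert (R4 : Re (Cmult (Cpow Ci 4) (Cplus (a, b) (Cmult (RtoC (2 ^ 4)) (p, q)))) = a + 16 * p)
    by (unfold Cmult, Cplus, RtoC, Ci; simpl; ring).
  pose proof (Hk 0%nat) as H0. pose proof (Hk 1%nat) as H1. pose proof (Hk 2%nat) as H2.
  pose proof (Hk 3%nat) as H3. pose proof (Hk 4%nat) as H4.
  rewrite R0 in H0. rewrite R1 in H1. rewrite R2 in H2. rewrite R3 in H3. rewrite R4 in H4.
  simpl pow in H0, H1, H2, H3, H4.
  assert (Ha : Rabs a <= 1) by (apply Rabs_le; nra).
  assert (Hp : Rabs p <= 1) by (apply Rabs_le; nra).
  split. lra.
  split. eapply Rle_trans. apply H0. lra.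
  split. eapply Rle_trans. apply H1. lra.
  split. eapply Rle_trans. apply H2. lra.
  split. eapply Rle_trans. apply H3. lra.
  pose proof (Rabs_triang_inv (fk t 4 x) (a + 16 * p)) as T1.
    pose proof (Rabs_triang a (16 * p)) as T2. rewrite Rabs_mult, (Rabs_pos_eq 16) in T2 by lra.
    lra.
Qed.

Open Scope R_scope.

Lemma scale_le g X B g0 : 0 < g0 <= g -> g * Rabs X <= B -> Rabs X <= B / g0.
Proof.
  intros [H1 H2] H3. pose proof (Rabs_pos X).
  apply Rmult_le_reg_r with g0; auto. unfold Rdiv. rewrite Rmult_assoc, Rinv_l by lra. nra.
Qed.

Lemma d1_bound v b1 b2 b3 c : 1 <= v -> 0 <= c ->
  Rabs (b1 * v + b2 * v ^ 2 + b3 * v ^ 3) <= / 64 + c * v ^ 4 ->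
  Rabs (b1 + b2 * v + b3 * v ^ 2) <= / 64 + c * v ^ 3.
Proof.
  intros Hv Hc H.
  replace (/ 64 + c * v ^ 3) with ((/ 64 + c * v ^ 3) * v / v) by (field; lra).
  apply scale_le with (g := v). lra.
  replace (v * Rabs (b1 + b2 * v + b3 * v ^ 2)) with (Rabs ((b1 + b2 * v + b3 * v ^ 2) * v))
    by (rewrite Rabs_mult, (Rabs_pos_eq v) by lra; ring).
  replace ((b1 + b2 * v + b3 * v ^ 2) * v) with (b1 * v + b2 * v ^ 2 + b3 * v ^ 3) by ring.
  eapply Rle_trans. apply H. nra.
Qed.

Lemma divdiff v1 v2 v3 b1 b2 b3 :
  1 <= v1 -> v1 + 1 <= v2 -> v2 + 1 <= v3 -> v3 <= 7 ->
  Rabs (b1 * v1 + b2 * v1 ^ 2 + b3 * v1 ^ 3) <= / 64 + 3 / 8192 * v1 ^ 4 ->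
  Rabs (b1 * v2 + b2 * v2 ^ 2 + b3 * v2 ^ 3) <= / 64 + 3 / 8192 * v2 ^ 4 ->
  Rabs (b1 * v3 + b2 * v3 ^ 2 + b3 * v3 ^ 3) <= / 64 + 3 / 8192 * v3 ^ 4 ->
  Rabs b3 <= 26 / 100 /\ Rabs b2 <= 4 /\ Rabs b1 <= 30.
Proof.
  intros h1 h2 h3 h4 E1 E2 E3.
  remember (3 / 8192) as c eqn:Hcv.
  assert (Hc : 0 <= c) by lra.
  apply d1_bound in E1; auto; try lra. apply d1_bound in E2; auto; try lra.
  apply d1_bound in E3; auto; try lra.
  assert (C1 : v1 ^ 3 <= 125) by (replace 125 with (5 ^ 3) by ring; apply pow_incr; lra).
  assert (C2 : v2 ^ 3 <= 216) by (replace 216 with (6 ^ 3) by ring; apply pow_incr; lra).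
  assert (C3 : v3 ^ 3 <= 343) by (replace 343 with (7 ^ 3) by ring; apply pow_incr; lra).
  assert (K1 : c * v1 ^ 3 <= c * 125) by (apply Rmult_le_compat_l; lra).
  assert (K2 : c * v2 ^ 3 <= c * 216) by (apply Rmult_le_compat_l; lra).
  assert (K3 : c * v3 ^ 3 <= c * 343) by (apply Rmult_le_compat_l; lra).
  set (D11 := b1 + b2 * v1 + b3 * v1 ^ 2) in *.
  set (D12 := b1 + b2 * v2 + b3 * v2 ^ 2) in *.
  set (D13 := b1 + b2 * v3 + b3 * v3 ^ 2) in *.
  assert (F22 : Rabs (b2 + b3 * (v1 + v2)) <= (/ 32 + 341 * c) / 1).
  { apply scale_le with (g := v2 - v1). lra.
    replace ((v2 - v1) * Rabs (b2 + b3 * (v1 + v2))) with (Rabs ((v2 - v1) * (b2 + b3 * (v1 + v2)))) by (rewrite Rabs_mult, (Rabs_pos_eq (v2 - v1)) by lra; ring).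
    replace ((v2 - v1) * (b2 + b3 * (v1 + v2))) with (D12 - D11) by (unfold D11, D12; ring).
    unfold Rminus. eapply Rle_trans. apply Rabs_triang. rewrite Rabs_Ropp. lra. }
  assert (F23 : Rabs (b2 + b3 * (v1 + v3)) <= (/ 32 + 468 * c) / 2).
  { apply scale_le with (g := v3 - v1). lra.
    replace ((v3 - v1) * Rabs (b2 + b3 * (v1 + v3))) with (Rabs ((v3 - v1) * (b2 + b3 * (v1 + v3)))) by (rewrite Rabs_mult, (Rabs_pos_eq (v3 - v1)) by lra; ring).
    replace ((v3 - v1) * (b2 + b3 * (v1 + v3))) with (D13 - D11) by (unfold D11, D13; ring).
    unfold Rminus. eapply Rle_trans. apply Rabs_triang. rewrite Rabs_Ropp. lra. }
  assert (F3 : Rabs b3 <= ((/ 32 + 341 * c) / 1 + (/ 32 + 468 * c) / 2) / 1).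
  { apply scale_le with (g := v3 - v2). lra.
    replace ((v3 - v2) * Rabs b3) with (Rabs ((v3 - v2) * b3)) by (rewrite Rabs_mult, (Rabs_pos_eq (v3 - v2)) by lra; ring).
    replace ((v3 - v2) * b3) with ((b2 + b3 * (v1 + v3)) - (b2 + b3 * (v1 + v2))) by ring.
    unfold Rminus. eapply Rle_trans. apply Rabs_triang. rewrite Rabs_Ropp. lra. }
  subst c.
  assert (B3 : Rabs b3 <= 26 / 100) by lra.
  assert (B2 : Rabs b2 <= 4).
  { replace b2 with ((b2 + b3 * (v1 + v2)) - b3 * (v1 + v2)) by ring.
    eapply Rle_trans. apply Rabs_triang. rewrite Rabs_Ropp, Rabs_mult, (Rabs_pos_eq (v1 + v2)) by lra.
    nra. }
  split; auto. split; auto.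
  replace b1 with (D11 - b2 * v1 - b3 * v1 ^ 2) by (unfold D11; ring).
  unfold Rminus. eapply Rle_trans. apply Rabs_triang. rewrite Rabs_Ropp.
  eapply Rle_trans. apply Rplus_le_compat_r. apply Rabs_triang. rewrite Rabs_Ropp.
  rewrite !Rabs_mult, (Rabs_pos_eq v1), (Rabs_pos_eq (v1 ^ 2)) by (try apply pow_le; lra).
  assert (v1 ^ 2 <= 25) by nra.
  pose proof (Rabs_pos b2). pose proof (Rabs_pos b3).
  nra.
Qed.

Lemma Rabs_le_inv' x y : Rabs x <= y -> - y <= x <= y.
Proof. intros H. unfold Rabs in H. destruct (Rcase_abs x); lra. Qed.

Lemma final a b p q F0 F1 F2 F3 :
  a ^ 2 + b ^ 2 + p ^ 2 + q ^ 2 = 1 ->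
  Rabs (F0 - (a + p)) <= / 50 ->
  Rabs (F1 - (- b - 2 * q)) <= / 50 ->
  Rabs (F2 - (- a - 4 * p)) <= / 50 ->
  Rabs (F3 - (b + 8 * q)) <= / 50 ->
  Rabs F0 <= / 100 -> Rabs F1 <= / 100 -> Rabs F2 <= / 100 -> Rabs F3 <= 156 / 100 -> False.
Proof.
  intros N H0 H1 H2 H3 G0 G1 G2 G3.
  apply Rabs_le_inv' in H0, H1, H2, H3, G0, G1, G2, G3.
  assert (Pp : - 2 / 100 <= p <= 2 / 100) by lra.
  assert (Pa : - 5 / 100 <= a <= 5 / 100) by lra.
  assert (Pq : - 27 / 100 <= q <= 27 / 100) by lra.
  assert (Pb : - 57 / 100 <= b <= 57 / 100) by lra.
  nra.
Qed.

Open Scope R_scope.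

Lemma taylor3 t x0 y : x0 < y -> exists z,
  fk t 0 y = fk t 0 x0 + fk t 1 x0 * (y - x0) + fk t 2 x0 / 2 * (y - x0) ^ 2
             + fk t 3 x0 / 6 * (y - x0) ^ 3 + (y - x0) ^ 4 / 24 * fk t 4 z.
Proof.
  intros Hxy.
  destruct (Taylor_Lagrange (fk t 0) 3 x0 y Hxy) as [z [Hz E]].
  { intros; apply ex_derive_n_fk. }
  exists z. rewrite (sum_eq _ (fun m => (y - x0) ^ m / INR (Factorial.fact m) * fk t m x0)) in E by (intros; rewrite Derive_n_fk; reflexivity). rewrite Derive_n_fk in E. rewrite E. simpl. field.
Qed.

Lemma point_scaled eta u F0 F1 F2 F3 Y r :
  0 < eta -> eta <= / 2048 -> eta <= u ->
  Y = F0 + F1 * u + F2 / 2 * u ^ 2 + F3 / 6 * u ^ 3 + r ->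
  Rabs Y < eta ^ 3 / 2 ^ 7 -> Rabs F0 < eta ^ 3 / 2 ^ 7 -> Rabs r <= 18 * u ^ 4 / 24 ->
  Rabs ((F1 / eta ^ 2) * (u / eta) + (F2 / (2 * eta)) * (u / eta) ^ 2 + (F3 / 6) * (u / eta) ^ 3)
   <= / 64 + 3 / 8192 * (u / eta) ^ 4.
Proof.
  intros He He2 Hu EY HY HF Hr.
  set (v := u / eta).
  assert (Hv : u = v * eta) by (unfold v; field; lra).
  assert (E : (F1 / eta ^ 2) * v + (F2 / (2 * eta)) * v ^ 2 + (F3 / 6) * v ^ 3
              = (Y - F0 - r) / eta ^ 3).
  { rewrite EY, Hv. field. lra. }
  rewrite E. unfold Rdiv at 1. rewrite Rabs_mult, Rabs_inv, (Rabs_pos_eq (eta ^ 3)) by (apply pow_le; lra).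
  assert (Hp : 0 < eta ^ 3) by (apply pow_lt; lra).
  apply Rmult_le_reg_r with (eta ^ 3); auto.
  rewrite Rmult_assoc, Rinv_l by lra.
  rewrite Rmult_1_r. unfold Rminus. eapply Rle_trans. apply Rabs_triang. eapply Rle_trans.
  apply Rplus_le_compat_r. apply Rabs_triang. rewrite !Rabs_Ropp.
  rewrite Hv in Hr.
  assert (v ^ 4 * eta ^ 4 <= v ^ 4 * eta ^ 3 / 2048).
  { replace (v ^ 4 * eta ^ 4) with (v ^ 4 * eta ^ 3 * eta) by ring.
    unfold Rdiv. apply Rmult_le_compat_l. apply Rmult_le_pos. apply pow_le.
    unfold v. apply Rmult_le_pos; [lra | left; apply Rinv_0_lt_compat; lra]. lra. lra. }
  replace ((v * eta) ^ 4) with (v ^ 4 * eta ^ 4) in Hr by ring.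
  simpl pow in HY, HF. simpl pow. nra.
Qed.

Lemma le_div k u eta : 0 < eta -> k * eta <= u -> k <= u / eta.
Proof.
  intros He H. apply Rmult_le_reg_r with eta; auto. unfold Rdiv.
  rewrite Rmult_assoc, Rinv_l by lra. lra.
Qed.

Theorem lemma3p4 (t : nat) (ht_odd : Nat.Odd t) (ht_pos : (0 < t)%nat)
  (eta : R) (heta0 : 0 < eta) (heta1 : eta < / 2 ^ 11) (a : R) :
  exists j : nat, (j <= 6)%nat /\
    forall x : R, a + INR j * eta <= x <= a + (INR j + 1) * eta ->
      eta ^ 3 / 2 ^ 7 <= Rabs (Re (H t x)).
Proof.
  apply NNPP; intro Hn.
  assert (Hall : forall j, (j <= 6)%nat -> exists x, a + INR j * eta <= x <= a + (INR j + 1) * eta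
                   /\ Rabs (fk t 0 x) < eta ^ 3 / 2 ^ 7).
  { intros j Hj. apply NNPP; intro Hx. apply Hn. exists j. split; auto. intros x Hxr.
    apply Rnot_lt_le. intro Hlt. apply Hx. exists x. rewrite <- f0_eq. auto. }
  assert (He2 : eta <= / 2048) by (simpl in heta1; lra).
  destruct (Hall 0%nat) as [x0 [R0 Y0]]; [lia|].
  destruct (Hall 2%nat) as [y1 [R1 Y1]]; [lia|].
  destruct (Hall 4%nat) as [y2 [R2 Y2]]; [lia|].
  destruct (Hall 6%nat) as [y3 [R3 Y3]]; [lia|].
  simpl INR in R0, R1, R2, R3.
  destruct (main_terms t x0) as [aa [bb [pp [qq [N [A0 [A1 [A2 [A3 _]]]]]]]]].
  destruct (taylor3 t x0 y1) as [z1 T1]; [lra|].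
  destruct (taylor3 t x0 y2) as [z2 T2]; [lra|].
  destruct (taylor3 t x0 y3) as [z3 T3]; [lra|].
  destruct (main_terms t z1) as [_ [_ [_ [_ [_ [_ [_ [_ [_ M1]]]]]]]]].
  destruct (main_terms t z2) as [_ [_ [_ [_ [_ [_ [_ [_ [_ M2]]]]]]]]].
  destruct (main_terms t z3) as [_ [_ [_ [_ [_ [_ [_ [_ [_ M3]]]]]]]]].
  assert (Rb : forall u z, Rabs (fk t 4 z) <= 18 -> 0 <= u -> Rabs (u ^ 4 / 24 * fk t 4 z) <= 18 * u ^ 4 / 24).
  { intros u z Hz Hu. rewrite Rabs_mult, Rabs_pos_eq. 2: { apply Rmult_le_pos. apply pow_le; auto. lra. }
    assert (0 <= u ^ 4 / 24) by (apply Rmult_le_pos; [apply pow_le; auto | lra]). nra. }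
  assert (U1 : eta <= y1 - x0) by lra.
  pose proof (point_scaled eta (y1 - x0) (fk t 0 x0) (fk t 1 x0) (fk t 2 x0) (fk t 3 x0) _ _ heta0 He2 ltac:(lra) T1 Y1 Y0 (Rb (y1 - x0) z1 M1 ltac:(lra))) as P1.
  pose proof (point_scaled eta (y2 - x0) (fk t 0 x0) (fk t 1 x0) (fk t 2 x0) (fk t 3 x0) _ _ heta0 He2 ltac:(lra) T2 Y2 Y0 (Rb (y2 - x0) z2 M2 ltac:(lra))) as P2.
  pose proof (point_scaled eta (y3 - x0) (fk t 0 x0) (fk t 1 x0) (fk t 2 x0) (fk t 3 x0) _ _ heta0 He2 ltac:(lra) T3 Y3 Y0 (Rb (y3 - x0) z3 M3 ltac:(lra))) as P3.
  assert (V1 : 1 <= (y1 - x0) / eta) by (apply le_div; lra).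
  assert (V2 : (y1 - x0) / eta + 1 <= (y2 - x0) / eta).
  { cut (1 <= (y2 - y1) / eta). { intros; replace ((y2 - y1) / eta) with ((y2 - x0) / eta - (y1 - x0) / eta) in H by (field; lra). lra. }
    apply le_div; lra. }
  assert (V3 : (y2 - x0) / eta + 1 <= (y3 - x0) / eta).
  { cut (1 <= (y3 - y2) / eta). { intros; replace ((y3 - y2) / eta) with ((y3 - x0) / eta - (y2 - x0) / eta) in H by (field; lra). lra. }
    apply le_div; lra. }
  assert (V4 : (y3 - x0) / eta <= 7).
  { assert (- (y3 - x0) / eta >= -7). { apply Rle_ge. replace (- (y3 - x0) / eta) with ((x0 - y3) / eta) by (field; lra). apply le_div; lra. }
    replace (- (y3 - x0) / eta) with (- ((y3 - x0) / eta)) in H by (field; lra). lra. }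
  destruct (divdiff _ _ _ _ _ _ V1 V2 V3 V4 P1 P2 P3) as [B3 [B2 B1]].
  assert (E3 : Rabs (fk t 3 x0) <= 156 / 100).
  { replace (fk t 3 x0) with (6 * ((fk t 3 x0) / 6)) by field. rewrite Rabs_mult, Rabs_pos_eq by lra. lra. }
  assert (E2 : Rabs (fk t 2 x0) <= / 100).
  { replace (fk t 2 x0) with ((2 * eta) * ((fk t 2 x0) / (2 * eta))) by (field; lra). rewrite Rabs_mult, (Rabs_pos_eq (2 * eta)) by lra.
    pose proof (Rabs_pos ((fk t 2 x0) / (2 * eta))). nra. }
  assert (E1 : Rabs (fk t 1 x0) <= / 100).
  { replace (fk t 1 x0) with (eta ^ 2 * ((fk t 1 x0) / eta ^ 2)) by (field; lra). rewrite Rabs_mult, (Rabs_pos_eq (eta ^ 2)) by (apply pow_le; lra).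
    eapply Rle_trans. apply Rmult_le_compat_l. apply pow_le; lra. exact B1. simpl. nra. }
  assert (E0 : Rabs (fk t 0 x0) <= / 100).
  { assert (eta ^ 3 <= 1) by (simpl; nra). simpl pow in Y0. simpl in Y0. nra. }
  exact (final aa bb pp qq (fk t 0 x0) (fk t 1 x0) (fk t 2 x0) (fk t 3 x0) N A0 A1 A2 A3 E0 E1 E2 E3).
Qed.
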